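(* Let $A$ be an $\mathbb{F}_p$-algebra, $\delta=(\delta_1,\ldots,\delta_n)$ an $n$-tuple of pairwise commuting derivations of $A$, $d_\nu\in\mathbb{N}\cup\{\infty\}$, and let $\{x_\nu^{[p^{k}]}\mid \nu=1,\ldots,n;\ k\in\mathbb{N},\ k<d_\nu\}$ be pairwise commuting elements of $A$. Put $x_\nu^{[0]}=1$, and for $0\le i<p^{d_\nu}$ written $i=\sum_ki_kp^k$ ($0\le i_k<p$) put $x_\nu^{[i]}=\prod_k\frac{(x_\nu^{[p^k]})^{i_k}}{i_k!}$; for $\alpha\in I=\{\alpha\in\mathbb{N}^n\mid\alpha_\nu<p^{d_\nu}\}$ put $x^{[\alpha]}=\prod_{\nu=1}^nx_\nu^{[\alpha_\nu]}$. Then $\{x^{[\alpha]}\mid\alpha\in I\}$ is an iterative $\delta$-descent if and only if $\delta_\nu(x_\mu^{[p^{k}]})=\delta_{\nu,\mu}x_\mu^{[p^{k}-1]}$ and $(x_\mu^{[p^{k}]})^p=0$ for all $\nu,\mu=1,\ldots,n$ and $k\in\mathbb{N}$ with $k<d_\mu$ ($\delta_{\nu,\mu}$ the Kronecker delta).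
   Context: A family $\{y^{[\alpha]}\mid\alpha\in I\}$ is an iterative $\delta$-descent if $y^{[0]}=1$, $y^{[\alpha]}y^{[\beta]}=\binom{\alpha+\beta}{\beta}y^{[\alpha+\beta]}$ for all $\alpha,\beta\in I$ ($\binom{\alpha+\beta}{\beta}=\prod_i\binom{\alpha_i+\beta_i}{\beta_i}$ in $\mathbb{F}_p$; right side $0$ when $\alpha+\beta\notin I$), and $\delta_1^{\alpha_1}\cdots\delta_n^{\alpha_n}(y^{[\beta]})=y^{[\beta-\alpha]}$ for all $\alpha\in\mathbb{N}^n$, $\beta\in I$, with $y^{[\gamma]}=0$ for $\gamma\notin\mathbb{N}^n$. *)

(* Defs.v *)
From HB Require Import structures.
From mathcomp Require Import all_boot all_order all_algebra.
Set Implicit Arguments. Unset Strict Implicit. Unset Printing Implicit Defensive.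
Import GRing.Theory.
Local Open Scope ring_scope.

(* d : option nat encodes d_nu in N u {oo}; None = oo. *)
Definition ltd (k : nat) (d : option nat) : bool :=
  if d is Some m then (k < m)%N else true.

Definition ltpow (p : nat) (d : option nat) (i : nat) : bool :=
  if d is Some m then (i < p ^ m)%N else true.

Definition inI (n p : nat) (d : 'I_n -> option nat) (a : 'I_n -> nat) : bool :=
  [forall nu, ltpow p (d nu) (a nu)].

Definition invfact (A : nzRingType) (p c : nat) : A :=
  (nat_of_ord (((c`!)%:R : 'F_p)^-1))%:R.

Definition digit (p i k : nat) : nat := ((i %/ p ^ k) %% p)%N.

(* x_nu^[i] = prod_k (x_nu^[p^k])^{i_k} / i_k!, where x nu k stands for x_nu^[p^k] *)
Definition xdiv (A : nzRingType) (n p : nat) (x : 'I_n -> nat -> A) (nu : 'I_n) (i : nat) : A :=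
  \prod_(k < i.+1) ((x nu k) ^+ (digit p i k) * invfact A p (digit p i k)).

Definition xmulti (A : nzRingType) (n p : nat) (x : 'I_n -> nat -> A) (a : 'I_n -> nat) : A :=
  \prod_(nu < n) xdiv p x nu (a nu).

Definition is_derivation (A : nzRingType) (D : A -> A) : Prop :=
  (forall a b, D (a + b) = D a + D b) /\ (forall a b, D (a * b) = D a * b + a * D b).

Definition dpow (A : nzRingType) (n : nat) (delta : 'I_n -> A -> A) (a : 'I_n -> nat) : A -> A :=
  foldr (fun i f => iter (a i) (delta i) \o f) id (enum 'I_n).

Definition iterative_descent (A : nzRingType) (n : nat) (delta : 'I_n -> A -> A)
    (I : ('I_n -> nat) -> bool) (y : ('I_n -> nat) -> A) : Prop :=
  y (fun _ => 0%N) = 1 /\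
  (forall a b, I a -> I b ->
     y a * y b = (\prod_(i < n) 'C(a i + b i, b i))%:R *
                 (if I (fun i => a i + b i)%N then y (fun i => a i + b i)%N else 0)) /\
  (forall a b, I b ->
     dpow delta a (y b) = if [forall i, (a i <= b i)%N] then y (fun i => b i - a i)%N else 0).

(* Main.v *)
Require Import Defs.
From HB Require Import structures.
From mathcomp Require Import all_boot all_order all_algebra.
From mathcomp Require Import zify.
Import GRing.Theory.
Local Open Scope ring_scope.


Lemma coef1X (R : comNzRingType) n j :
  (((1 + 'X) ^+ n : {poly R})`_j) = ('C(n, j))%:R.
Proof.
rewrite exprDn coef_sum.
rewrite (eq_bigr (fun i : 'I_n.+1 => if (i == j :> nat) then ('C(n, j))%:R else 0)).
  rewrite -big_mkcond /= (big_ord1_eq _ (fun _ => _)); case: ltnP => // hj.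
  by rewrite bin_small.
move=> i _; rewrite expr1n mul1r coefMn coefXn.
case: eqP => [->|/eqP]; first by rewrite eqxx.
by rewrite eq_sym => /negbTE ->; rewrite mul0rn.
Qed.

Lemma lucasFp (p : nat) (pr : prime p) (N r s c e : nat) :
  (r < p ^ N)%N -> (s < p ^ N)%N ->
  ('C(r + p ^ N * c, s + p ^ N * e)%:R : 'F_p) = ('C(r, s) * 'C(c, e))%:R.
Proof.
move=> hr hs; set q := (p ^ N)%N.
have hq : [pchar {poly 'F_p}].-nat q.
  rewrite /q pnatX; apply/orP; left.
  rewrite pnatE // pchar_poly; exact: pchar_Fp.
rewrite -(coef1X _ (r + q * c)) exprD exprM (exprDn_pchar 1 'X hq) expr1n.
rewrite (exprDn 1 ('X ^+ q) c) mulr_sumr coef_sum.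
rewrite (eq_bigr (fun a : 'I_c.+1 => if (a == e :> nat) then ('C(r, s) * 'C(c, e))%:R else 0)).
  rewrite -big_mkcond /= (big_ord1_eq _ (fun _ => _)); case: ltnP => // he.
  by rewrite (bin_small he) muln0.
move=> a _; rewrite expr1n mul1r -exprM mulrnAr coefMn coefMXn coef1X.
have hq0 : (0 < q)%N by rewrite /q expn_gt0 prime_gt0.
case: (ltngtP a e) => hae.
- have -> : (s + q * e < q * a)%N = false.
    by apply/negbTE; rewrite -leqNgt; nia.
  rewrite bin_small ?mul0rn; last by nia.
  by [].
- have -> : (s + q * e < q * a)%N by nia.
  by rewrite mul0rn.
- rewrite hae ltnNge leq_addl /= addnK.
  by rewrite natrM mulr_natr.
Qed.


Lemma natA_mod {A : nzRingType} {p} m : p \in [pchar A] -> (m %% p)%:R = m%:R :> A.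
Proof.
move=> ch; rewrite [in RHS](divn_eq m p) natrD natrM (pcharf0 ch) mulr0 add0r //.
Qed.

Lemma FpA {A : nzRingType} {p} m n : p \in [pchar A] ->
  (m%:R : 'F_p) = n%:R -> (m%:R : A) = n%:R.
Proof.
move=> ch; have pr := pcharf_prime ch.
move/(congr1 (@nat_of_ord _)); rewrite !val_Fp_nat // => h.
by rewrite -(natA_mod m ch) h natA_mod.
Qed.

Definition phi (A : nzRingType) {p} (u : 'F_p) : A := (nat_of_ord u)%:R.

Lemma phiM {A : nzRingType} {p} (ch : p \in [pchar A]) (u v : 'F_p) :
  phi A (u * v) = phi A u * phi A v.
Proof.
have pr := pcharf_prime ch.
rewrite /phi -natrM; apply: (FpA _ _ ch).
by rewrite natrM !natr_Zp.
Qed.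

Lemma phi_nat {A : nzRingType} {p} (ch : p \in [pchar A]) m :
  phi A (m%:R : 'F_p) = m%:R.
Proof.
have pr := pcharf_prime ch.
by rewrite /phi val_Fp_nat // natA_mod.
Qed.

Lemma fact_unit {p c} : prime p -> (c < p)%N -> ((c`!)%:R : 'F_p) != 0.
Proof.
move=> pr; rewrite -(dvdn_pcharf (pchar_Fp pr)).
elim: c => [|c IH] hc; first by rewrite fact0 dvdn1 neq_ltn (prime_gt1 pr) orbT.
rewrite factS Euclid_dvdM // negb_or IH ?(ltnW hc) // andbT.
by apply/negP => /(dvdn_leq (ltn0Sn c)); rewrite leqNgt hc.
Qed.

Lemma invfactE {A : nzRingType} {p} (ch : p \in [pchar A]) c :
  invfact A p c = phi A (((c`!)%:R : 'F_p)^-1).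
Proof. by []. Qed.

Lemma invfact_mul {A : nzRingType} {p} (ch : p \in [pchar A]) c e : (c + e < p)%N ->
  invfact A p c * invfact A p e = ('C(c + e, e))%:R * invfact A p (c + e).
Proof.
move=> lt; have pr := pcharf_prime ch.
rewrite !invfactE // -(phi_nat ch) -!phiM //; congr (phi A _).
have hc := fact_unit pr (leq_ltn_trans (leq_addr _ _) lt).
have he := fact_unit pr (leq_ltn_trans (leq_addl _ _) lt).
have hce := fact_unit pr lt.
have := bin_fact (leq_addl c e); rewrite addnK => bf.
have hC : ('C(c + e, e)%:R : 'F_p) != 0.
  by apply: contra hce; rewrite -bf natrM => /eqP ->; rewrite mul0r.
rewrite -bf !natrM invfM mulrA mulfV // mul1r invfM mulrC //.
Qed.

Lemma invfactS {A : nzRingType} {p} (ch : p \in [pchar A]) c : (c.+1 < p)%N ->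
  (c.+1)%:R * invfact A p c.+1 = invfact A p c.
Proof.
move=> lt; have pr := pcharf_prime ch.
rewrite !invfactE // -(phi_nat ch) -!phiM //; congr (phi A _).
have hc := fact_unit pr (ltnW lt).
have hc1 := fact_unit pr lt.
have h1 : ((c.+1)%:R : 'F_p) != 0.
  by move: hc1; rewrite factS natrM mulf_eq0 negb_or => /andP[].
by rewrite factS natrM invfM mulrA mulfV // mul1r.
Qed.

Lemma invfact0 {A : nzRingType} {p} (ch : p \in [pchar A]) : invfact A p 0 = 1.
Proof. rewrite invfactE // fact0 invr1; exact: (phi_nat ch 1). Qed.

Lemma invfact1 {A : nzRingType} {p} (ch : p \in [pchar A]) : invfact A p 1 = 1.
Proof. rewrite invfactE // (_ : 1`! = 1%N) // invr1; exact: (phi_nat ch 1). Qed.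


Lemma digit_low p N r c k : (0 < p)%N -> (k < N)%N ->
  digit p (r + p ^ N * c) k = digit p r k.
Proof.
move=> p0 kN; rewrite /digit.
have -> : (p ^ N = p ^ k * (p * p ^ (N - k.+1)))%N.
  by rewrite -expnS -expnD; congr expn; lia.
rewrite addnC -mulnA mulnC divnMDl ?expn_gt0 ?p0 //.
by rewrite -mulnA mulnC modnMDl.
Qed.

Lemma digit_top p N r c : (r < p ^ N)%N -> (c < p)%N ->
  digit p (r + p ^ N * c) N = c.
Proof.
move=> rN cp; rewrite /digit addnC mulnC divnMDl; last by case: (p ^ N)%N rN.
by rewrite divn_small // addn0 modn_small.
Qed.

Lemma digit0 p k : digit p 0 k = 0%N.
Proof. by rewrite /digit div0n mod0n. Qed.

Definition tt {A : nzRingType} p (f : nat -> A) k c := f k ^+ c * invfact A p c.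
Definition Dn {A : nzRingType} p (f : nat -> A) N i :=
  \prod_(k < N) tt p f k (digit p i k).

Lemma Dn_split {A : nzRingType} {p} (f : nat -> A) N r c : (0 < p)%N ->
  (r < p ^ N)%N -> (c < p)%N ->
  Dn p f N.+1 (r + p ^ N * c) = Dn p f N r * tt p f N c.
Proof.
move=> p0 rN cp; rewrite /Dn big_ord_recr /= digit_top //; congr (_ * _).
by apply: eq_bigr => k _; rewrite digit_low.
Qed.

Lemma tt0 {A : nzRingType} {p} (ch : p \in [pchar A]) (f : nat -> A) k : tt p f k 0 = 1.
Proof. by rewrite /tt expr0 mul1r invfact0. Qed.

Lemma Dn0 {A : nzRingType} {p} (ch : p \in [pchar A]) (f : nat -> A) N : Dn p f N 0 = 1.
Proof. by rewrite /Dn big1 // => k _; rewrite digit0 tt0. Qed.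

Lemma Dn_widen {A : nzRingType} {p} (ch : p \in [pchar A]) (f : nat -> A) N M i :
  (N <= M)%N -> (i < p ^ N)%N -> Dn p f M i = Dn p f N i.
Proof.
have p0 := prime_gt0 (pcharf_prime ch).
move=> /subnK <-; elim: (M - N)%N => [|m IH] iN; first by [].
rewrite addSn -[i]addn0 -(muln0 (p ^ (m + N))%N) Dn_split //; last first.
  by apply: leq_trans iN _; rewrite leq_exp2l ?leq_addl // prime_gt1 // (pcharf_prime ch).
by rewrite muln0 addn0 tt0 // mulr1 IH.
Qed.

Definition Cf {A : nzRingType} (f : nat -> A) z := forall l, GRing.comm z (f l).

Lemma comm_tt_r {A : nzRingType} p (f : nat -> A) z k c : Cf f z -> GRing.comm z (tt p f k c).
Proof. by move=> h; apply: commrM; [apply: commrX; apply: h | apply: commr_nat]. Qed.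

Lemma comm_Dn_r {A : nzRingType} p (f : nat -> A) z N i : Cf f z -> GRing.comm z (Dn p f N i).
Proof. by move=> h; apply: commr_prod => k _; apply: comm_tt_r. Qed.

Lemma Cf_tt {A : nzRingType} p (f : nat -> A) (Hc : forall k l, GRing.comm (f k) (f l)) k c :
  Cf f (tt p f k c).
Proof.
move=> l; apply: commr_sym; apply: commrM; last exact: commr_nat.
by apply: commrX; apply: Hc.
Qed.

Lemma Cf_Dn {A : nzRingType} p (f : nat -> A) (Hc : forall k l, GRing.comm (f k) (f l)) N i :
  Cf f (Dn p f N i).
Proof.
move=> l; apply: commr_sym; apply: commr_prod => k _; apply: commr_sym.
exact: Cf_tt.
Qed.

Lemma ttM {A : nzRingType} {p} (ch : p \in [pchar A]) (f : nat -> A) k c e :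
  f k ^+ p = 0 ->
  tt p f k c * tt p f k e = if (c + e < p)%N then ('C(c + e, e))%:R * tt p f k (c + e) else 0.
Proof.
move=> hp; rewrite /tt mulrA -[_ * f k ^+ e]mulrA [invfact _ _ c * _](commr_sym (commr_nat _ _)).
rewrite !mulrA -exprD -mulrA; case: ltnP => h.
  by rewrite invfact_mul // mulrA (commr_nat _ _).
by rewrite -(subnK h) exprD hp mulr0 mul0r.
Qed.

Lemma lucasA {A : nzRingType} {p} (ch : p \in [pchar A]) N r s c e :
  (r < p ^ N)%N -> (s < p ^ N)%N ->
  ('C(r + p ^ N * c, s + p ^ N * e)%:R : A) = ('C(r, s) * 'C(c, e))%:R.
Proof. by move=> hr hs; apply: (FpA _ _ ch); apply: lucasFp => //; exact: pcharf_prime ch. Qed.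

Lemma decomp {p N i} : (0 < p)%N -> (i < p ^ N.+1)%N ->
  exists r c, [/\ (r < p ^ N)%N, (c < p)%N & i = r + p ^ N * c]%N.
Proof.
move=> p0 hi; exists (i %% p ^ N)%N, (i %/ p ^ N)%N; split.
- by rewrite ltn_pmod // expn_gt0 p0.
- by rewrite ltn_divLR ?expn_gt0 ?p0 // -expnS.
- by rewrite addnC mulnC -divn_eq.
Qed.

Lemma mul4 {A : nzRingType} (a b c d : A) : GRing.comm b c ->
  a * b * (c * d) = (a * c) * (b * d).
Proof. by move=> h; rewrite -mulrA (mulrA b) h -!mulrA. Qed.

Lemma DnM {A : nzRingType} {p} (ch : p \in [pchar A]) (f : nat -> A)
  (Hc : forall k l, GRing.comm (f k) (f l)) (Hp : forall k, f k ^+ p = 0) N i j :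
  (i < p ^ N)%N -> (j < p ^ N)%N ->
  Dn p f N i * Dn p f N j =
  ('C(i + j, j))%:R * (if (i + j < p ^ N)%N then Dn p f N (i + j) else 0).
Proof.
have p0 := prime_gt0 (pcharf_prime ch).
elim: N i j => [|N IH] i j.
  rewrite expn0 => hi hj; have -> : i = 0%N by lia.
  have -> : j = 0%N by lia.
  by rewrite /Dn !big_ord0 mulr1.
move=> /(decomp p0) [r [c [hr hc ->]]] /(decomp p0) [s [e [hs he ->]]].
rewrite !Dn_split // (mul4 _ _ _ _ (comm_Dn_r _ _ _ _ _ (Cf_tt _ _ Hc N c))) IH //.
rewrite -mulrA ttM //.
set q := (p ^ N)%N.
have E : (r + q * c + (s + q * e) = (r + s) + q * (c + e))%N by nia.
rewrite E expnS.
case: (ltnP (r + s) q) => hrs.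
- rewrite lucasA //; case: (ltnP (c + e) p) => hce.
  + have -> : (r + s + q * (c + e) < p * q)%N by nia.
    rewrite Dn_split // natrM -!mulrA; congr (_ * _).
    by rewrite mulrA (commr_nat _ _) -mulrA.
  + have -> : (r + s + q * (c + e) < p * q)%N = false by apply/negbTE; rewrite -leqNgt; nia.
    by rewrite !mulr0.
- rewrite mul0r mulr0.
  have -> : (r + s + q * (c + e) = (r + s - q) + q * (c + e).+1)%N by nia.
  rewrite lucasA //; last by rewrite /q; lia.
  by rewrite bin_small ?mul0n ?mul0r //; lia.
Qed.


Lemma der0 {A : nzRingType} (D : A -> A) : is_derivation D -> D 0 = 0.
Proof.
move=> [hA _]; have := hA 0 0; rewrite addr0 => h.
by apply: (addrI (D 0)); rewrite addr0 -h.
Qed.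

Lemma der1 {A : nzRingType} (D : A -> A) : is_derivation D -> D 1 = 0.
Proof.
move=> [hA hM]; have := hM 1 1; rewrite !mul1r mulr1 => h.
apply: (addrI (D 1)); by rewrite addr0 -h.
Qed.

Lemma der_nat {A : nzRingType} (D : A -> A) n : is_derivation D -> D n%:R = 0.
Proof.
move=> hD; elim: n => [|n IH]; first by rewrite der0.
by rewrite -addn1 natrD hD.1 IH der1 // addr0.
Qed.

Lemma derMn {A : nzRingType} (D : A -> A) x n : is_derivation D -> D (x * n%:R) = D x * n%:R.
Proof. by move=> hD; rewrite hD.2 (der_nat D n hD) mulr0 addr0. Qed.

Lemma derX {A : nzRingType} (D : A -> A) f c : is_derivation D -> GRing.comm f (D f) ->
  D (f ^+ c.+1) = (c.+1)%:R * (f ^+ c * D f).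
Proof.
move=> hD hc; elim: c => [|c IH]; first by rewrite expr1 expr0 mul1r mul1r.
rewrite exprSr hD.2 IH -!mulrA -hc [f ^+ c * _]mulrA -exprSr.
by rewrite -[in RHS](addn1 c.+1) natrD mulrDl mul1r.
Qed.

Lemma derX0 {A : nzRingType} (D : A -> A) f c : is_derivation D -> D f = 0 -> D (f ^+ c) = 0.
Proof.
move=> hD h; elim: c => [|c IH]; first by rewrite expr0 der1.
by rewrite exprSr hD.2 IH h mul0r mulr0 addr0.
Qed.

Lemma der_prod0 {A : nzRingType} (D : A -> A) I (r : seq I) (F : I -> A) :
  is_derivation D -> (forall i, D (F i) = 0) -> D (\prod_(i <- r) F i) = 0.
Proof.
move=> hD h; elim: r => [|a r IH]; first by rewrite big_nil der1.
by rewrite big_cons hD.2 IH h mul0r mulr0 addr0.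
Qed.

Lemma Dn_der0 {A : nzRingType} p (D : A -> A) (f : nat -> A) N i : is_derivation D ->
  (forall k, (k < N)%N -> D (f k) = 0) -> D (Dn p f N i) = 0.
Proof.
move=> hD h; rewrite /Dn; apply: der_prod0 => // k.
by rewrite /tt derMn // (derX0 _ _ _ hD (h k (ltn_ord k))) mul0r.
Qed.

Lemma shuffle {A : nzRingType} (a b : nat) (F G : A) :
  a%:R * (F * G) * b%:R = F * (a%:R * b%:R) * G.
Proof.
rewrite mulrA -(commr_nat F a) -mulrA (commr_nat G b) !mulrA //.
Qed.

Lemma Dtt {A : nzRingType} {p} (ch : p \in [pchar A]) (D : A -> A) (f : nat -> A) k c :
  is_derivation D -> GRing.comm (f k) (D (f k)) -> (c < p)%N ->
  D (tt p f k c) = if (0 < c)%N then tt p f k c.-1 * D (f k) else 0.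
Proof.
move=> hD hc cp; rewrite /tt derMn //; case: c cp => [|c] cp.
  by rewrite expr0 der1 // mul0r.
rewrite derX //= -(invfactS ch c cp).
exact: shuffle.
Qed.

Lemma DnD {A : nzRingType} {p} (ch : p \in [pchar A]) (D : A -> A) (f : nat -> A)
  (Hc : forall k l, GRing.comm (f k) (f l)) (Hp : forall k, f k ^+ p = 0) N :
  is_derivation D ->
  (forall k, (k < N)%N -> D (f k) = Dn p f k (p ^ k - 1)) ->
  forall i, (i < p ^ N)%N -> D (Dn p f N i) = if (0 < i)%N then Dn p f N i.-1 else 0.
Proof.
move=> hD; have p0 := prime_gt0 (pcharf_prime ch).
elim: N => [|N IH] Hd i.
  rewrite expn0 => hi; have -> : i = 0%N by lia.
  by rewrite Dn0 // der1.
move=> /(decomp p0) [r [c [hr hc ->]]].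
have IH' := IH (fun k hk => Hd k (ltnW hk)).
have q0 : (0 < p ^ N)%N by rewrite expn_gt0 p0.
have hg := Hd N (ltnSn N).
have cg : GRing.comm (f N) (D (f N)).
  by rewrite hg; apply: commr_sym; apply: Cf_Dn.
rewrite Dn_split // hD.2 (Dtt ch _ _ _ _ hD cg hc) IH' //.
have cgt : forall c', GRing.comm (D (f N)) (tt p f N c').
  by move=> c'; rewrite hg; apply: comm_tt_r; apply: Cf_Dn.
case: r hr => [|r] hr.
- rewrite /= Dn0 // mul0r add0r mul1r.
  case: c hc => [|c] hc; first by rewrite muln0.
  have hq1 : (p ^ N - 1 < p ^ N)%N by lia.
  rewrite /= -cgt hg -(Dn_split f N _ _ p0 hq1 (ltnW hc)).
  have -> : (0 + p ^ N * c.+1)%N = (p ^ N - 1 + p ^ N * c).+1 by nia.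
  by rewrite ltn0Sn.
- rewrite /=.
  have -> : (Dn p f N r.+1 * (if (0 < c)%N then tt p f N c.-1 * D (f N) else 0)) = 0.
    case: c hc => [|c] hc; first by rewrite mulr0.
    rewrite /= -cgt hg mulrA DnM //; last by lia.
    case: ifP => h; last by rewrite mulr0 mul0r.
    by exfalso; lia.
  have hr' : (r < p ^ N)%N by lia.
  by rewrite addr0 -(Dn_split f N _ _ p0 hr' hc) //=.
Qed.


Lemma prod_split {A : nzRingType} {I : Type} (r : seq I) (F G : I -> A) :
  (forall i j, GRing.comm (G i) (F j)) ->
  \prod_(i <- r) (F i * G i) = (\prod_(i <- r) F i) * (\prod_(i <- r) G i).
Proof.
move=> h; elim: r => [|a r IH]; first by rewrite !big_nil mulr1.
rewrite !big_cons IH -!mulrA; congr (_ * _); rewrite !mulrA; congr (_ * _).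
by apply: commr_prod => j _; apply: h.
Qed.

Lemma prod_if {A : nzRingType} {I : Type} (r : seq I) (P : pred I) (F : I -> A) :
  \prod_(i <- r) (if P i then F i else 0) = if all P r then \prod_(i <- r) F i else 0.
Proof.
elim: r => [|a r IH]; first by rewrite !big_nil.
rewrite !big_cons IH /=; case: (P a) => /=; last by rewrite mul0r.
by case: (all P r); rewrite ?mulr0.
Qed.

Lemma prod_zero {A : nzRingType} {I : eqType} (r : seq I) (F : I -> A) nu :
  nu \in r -> F nu = 0 -> \prod_(i <- r) F i = 0.
Proof.
move=> + h; elim: r => [|a r IH] //; rewrite in_cons big_cons => /orP [/eqP <-|/IH ->].
  by rewrite h mul0r.
by rewrite mulr0.
Qed.

Lemma der_prod0_in {A : nzRingType} (D : A -> A) {I : eqType} (r : seq I) (F : I -> A) :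
  is_derivation D -> (forall i, i \in r -> D (F i) = 0) -> D (\prod_(i <- r) F i) = 0.
Proof.
move=> hD; elim: r => [|a r IH] h; first by rewrite big_nil der1.
rewrite big_cons hD.2 IH ?h ?mem_head ?mul0r ?mulr0 ?addr0 // => i hi.
by apply: h; rewrite in_cons hi orbT.
Qed.

Lemma der_prod_one {A : nzRingType} (D : A -> A) {I : eqType} (r : seq I) (F : I -> A) nu G :
  is_derivation D -> uniq r -> nu \in r ->
  (forall i, i != nu -> D (F i) = 0) -> D (F nu) = G ->
  D (\prod_(i <- r) F i) = \prod_(i <- r) (if i == nu then G else F i).
Proof.
move=> hD; elim: r => [|a r IH] //= /andP [ar ur]; rewrite in_cons => hnu h0 hG.
rewrite !big_cons hD.2; case: (eqVneq a nu) => [ean|nan].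
  subst a; rewrite (der_prod0_in _ _ _ hD) ?mulr0 ?addr0 ?hG; last first.
    by move=> i ir; apply: h0; apply: contraNneq ar => <-.
  congr (_ * _); apply: eq_big_seq => i ir.
  by case: eqP => // ein; move: ar; rewrite -ein ir.
rewrite h0 // mul0r add0r IH //.
by move: hnu; rewrite eq_sym (negbTE nan).
Qed.

Lemma iter_der0 {A : nzRingType} (D : A -> A) m : is_derivation D -> iter m D 0 = 0.
Proof. by move=> hD; elim: m => [|m IH] //=; rewrite IH der0. Qed.

Lemma Cf_Dn2 {A : nzRingType} p (f g : nat -> A) (Hc : forall k l, GRing.comm (f k) (g l)) N i :
  Cf g (Dn p f N i).
Proof.
move=> l; apply: commr_sym; apply: commr_prod => k _; apply: commr_sym.
move=> {}; apply: commr_sym; apply: commrM; last exact: commr_nat.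
by apply: commrX; apply: commr_sym; apply: Hc.
Qed.

Lemma Dn_eqf {A : nzRingType} p (f g : nat -> A) N i :
  (forall k, (k < N)%N -> f k = g k) -> Dn p f N i = Dn p g N i.
Proof. by move=> h; apply: eq_bigr => k _; rewrite /tt h. Qed.

Lemma xdiv_Dn {A : nzRingType} {p} (ch : p \in [pchar A]) n (x : 'I_n -> nat -> A) nu N i :
  (i < p ^ N)%N -> xdiv p x nu i = Dn p (x nu) N i.
Proof.
move=> hi; have p1 := prime_gt1 (pcharf_prime ch).
have hi1 : (i < p ^ i.+1)%N by apply: ltn_trans (ltn_expl _ p1); apply: ltnSn.
have -> : xdiv p x nu i = Dn p (x nu) i.+1 i by [].
rewrite -(Dn_widen ch _ _ _ _ (leq_maxr N i.+1) hi1).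
by rewrite (Dn_widen ch _ _ _ _ (leq_maxl N i.+1) hi).
Qed.

Lemma foldr_unit {A : nzRingType} n (delta : 'I_n -> A -> A) nu (s : seq 'I_n) z :
  uniq s ->
  foldr (fun i f => iter (if i == nu then 1 else 0)%N (delta i) \o f) id s z =
  if nu \in s then delta nu z else z.
Proof.
elim: s => [|a s IH] //= /andP [nas us]; rewrite IH // in_cons.
case: (eqVneq a nu) => [<-|ne] /=; last by [].
by rewrite (negbTE nas).
Qed.

Lemma dpow_unit {A : nzRingType} n (delta : 'I_n -> A -> A) nu z :
  dpow delta (fun i => if i == nu then 1%N else 0%N) z = delta nu z.
Proof. by rewrite /dpow foldr_unit ?enum_uniq // mem_enum. Qed.


Theorem corollary2p8 (A : nzRingType) (p : nat) (n : nat)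
    (charA : p \in [pchar A])
    (delta : 'I_n -> A -> A)
    (der : forall nu, is_derivation (delta nu))
    (comm_der : forall nu mu a, delta nu (delta mu a) = delta mu (delta nu a))
    (d : 'I_n -> option nat)
    (x : 'I_n -> nat -> A)
    (comm_x : forall nu mu k l, ltd k (d nu) -> ltd l (d mu) ->
                 x nu k * x mu l = x mu l * x nu k) :
  iterative_descent delta (inI p d) (xmulti p x) <->
  (forall nu mu k, ltd k (d mu) ->
     delta nu (x mu k) = (if nu == mu then xdiv p x mu (p ^ k - 1)%N else 0)
     /\ (x mu k) ^+ p = 0).
Proof.
have pr := pcharf_prime charA; have p0 := prime_gt0 pr; have p1 := prime_gt1 pr.
pose F nu k := if ltd k (d nu) then x nu k else 0.
have FC : forall nu mu k l, GRing.comm (F nu k) (F mu l).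
  move=> nu mu k l; rewrite /F; case: ifP => hk; case: ifP => hl; rewrite /GRing.comm ?mulr0 ?mul0r //.
  exact: comm_x.
pose Nb nu (j : nat) := if d nu is Some m then m else j.+1.
have Nb_ok : forall nu j k, (k < Nb nu j)%N -> ltd k (d nu).
  by move=> nu j k; rewrite /Nb /ltd; case: (d nu).
have Nb_lt : forall nu i j, ltpow p (d nu) i -> (i <= j)%N -> (i < p ^ Nb nu j)%N.
  move=> nu i j; rewrite /Nb /ltpow; case: (d nu) => // _ ij.
  by have := ltn_expl j.+1 p1; lia.
have Nb_iff : forall nu j, ltpow p (d nu) j = (j < p ^ Nb nu j)%N.
  move=> nu j; rewrite /Nb /ltpow; case: (d nu) => //.
  by have := ltn_expl j.+1 p1; lia.
have xdivF : forall nu N i, (forall k, (k < N)%N -> ltd k (d nu)) -> (i < p ^ N)%N ->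
    xdiv p x nu i = Dn p (F nu) N i.
  move=> nu N i hN hi; rewrite (xdiv_Dn charA _ x nu _ _ hi); apply: Dn_eqf => k hk.
  by rewrite /F hN.
have xdiv_comm : forall nu mu i j, ltpow p (d nu) i -> ltpow p (d mu) j ->
    GRing.comm (xdiv p x nu i) (xdiv p x mu j).
  move=> nu mu i j hi hj.
  rewrite (xdivF nu (Nb nu i) i (Nb_ok nu i) (Nb_lt _ _ _ hi (leqnn i))).
  rewrite (xdivF mu (Nb mu j) j (Nb_ok mu j) (Nb_lt _ _ _ hj (leqnn j))).
  by apply: comm_Dn_r; apply: Cf_Dn2 => k l; apply: FC.
have xmulti_ext : forall a b : 'I_n -> nat, (forall i, a i = b i) -> xmulti p x a = xmulti p x b.
  by move=> a b h; apply: eq_bigr => i _; rewrite h.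
have inI_le : forall a b : 'I_n -> nat, inI p d b -> (forall i, (a i <= b i)%N) -> inI p d a.
  move=> a b /forallP hb hab; apply/forallP => i; move: (hb i) (hab i); rewrite /ltpow.
  by case: (d i) => // m; lia.
have xdiv0 : forall nu, xdiv p x nu 0 = 1.
  by move=> nu; rewrite (xdiv_Dn charA _ x nu 0 0) ?expn0 // /Dn big_ord0.
have xmulti_single : forall mu j, xmulti p x (fun i => if i == mu then j else 0%N) = xdiv p x mu j.
  move=> mu j; rewrite /xmulti (eq_bigr (fun i => if i == mu then xdiv p x mu j else 1)).
    by rewrite -big_mkcond big_pred1_eq.
  by move=> i _; case: eqP => [->|]; rewrite ?xdiv0.
split.
  move=> [H0 [HM HD]] nu mu k hk.
  pose a := fun i => if i == mu then (p ^ k)%N else 0%N.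
  have aI : inI p d a.
    apply/forallP => i; rewrite /a; case: eqP => [->|_]; move: hk; rewrite /ltpow /ltd.
      by case: (d mu) => // m km; rewrite ltn_exp2l.
    by case: (d i) => // m _; rewrite expn_gt0 p0.
  have xa : xmulti p x a = x mu k.
    rewrite xmulti_single (xdiv_Dn charA _ x mu k.+1); last by rewrite ltn_exp2l.
    rewrite -[(p ^ k)%N]add0n -[(p ^ k)%N]muln1 Dn_split // ?expn_gt0 ?p0 //.
    by rewrite Dn0 // mul1r /tt expr1 invfact1 // mulr1.
  split.
    have := HD (fun i => if i == nu then 1%N else 0%N) a aI.
    rewrite xa dpow_unit => ->.
    case: (eqVneq nu mu) => [enm|nm].
      rewrite -enm.
      have -> : [forall i, (if i == nu then 1 else 0) <= a i]%N.
        apply/forallP => i; rewrite /a -enm; case: (i == nu) => //.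
        by rewrite expn_gt0 p0.
      rewrite -xmulti_single; apply: xmulti_ext => i; rewrite /a -enm.
      by case: eqP.
    case: forallP => // /(_ nu); rewrite eqxx /a (negbTE nm).
    by [].
  have pw : forall j, x mu k ^+ j = (j`!)%:R *
      (if inI p d (fun i => j * a i)%N then xmulti p x (fun i => j * a i)%N else 0).
    elim=> [|j IH].
      rewrite expr0 fact0 mul1r.
      have -> : inI p d (fun i => 0 * a i)%N by apply: (inI_le _ a aI) => i; rewrite mul0n.
      by rewrite -H0; apply: xmulti_ext => i; rewrite mul0n.
    rewrite exprSr IH -xa; case: ifP => hj; last first.
      have -> : inI p d (fun i => j.+1 * a i)%N = false.
        apply/negP => h; move: hj; rewrite (inI_le _ _ h) // => i.
        by rewrite leq_mul2r leqnSn orbT.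
      by rewrite !mulr0 mul0r.
    rewrite -mulrA HM //.
    have E : forall i, (j * a i + a i = j.+1 * a i)%N by move=> i; rewrite mulSnr.
    have -> : inI p d (fun i => j * a i + a i)%N = inI p d (fun i => j.+1 * a i)%N.
      by apply: eq_forallb => i; rewrite E.
    have -> : xmulti p x (fun i => j * a i + a i)%N = xmulti p x (fun i => j.+1 * a i)%N.
      by apply: xmulti_ext => i; rewrite E.
    rewrite natr_prod (eq_bigr (fun i => if i == mu then (j.+1)%:R else 1)); last first.
      move=> i _; rewrite /a; case: eqP => _; last by rewrite muln0 addn0 bin0.
      have -> : (j * p ^ k + p ^ k = 0 + p ^ k * j.+1)%N by rewrite add0n mulnC mulnS addnC.
      rewrite -[X in 'C(_, X)](add0n (p ^ k)%N) -[X in 'C(_, 0 + X)]muln1.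
      by rewrite lucasA ?expn_gt0 ?p0 // bin0 mul1n bin1.
    rewrite -big_mkcond big_pred1_eq mulrA -natrM factS mulnC.
    by [].
  have := pw p; rewrite (_ : (p`!)%:R = 0 :> A) ?mul0r //.
  by apply/eqP; rewrite -(dvdn_pcharf charA) dvdn_fact // p0 leqnn.
move=> H.
have ltd_le : forall mu k k', ltd k (d mu) -> (k' <= k)%N -> ltd k' (d mu).
  by move=> mu k k'; rewrite /ltd; case: (d mu) => // m; lia.
have Hx : forall mu k, F mu k ^+ p = 0.
  move=> mu k; rewrite /F; case: ifP => hk; first exact: (H mu mu k hk).2.
  by rewrite expr0n; case: eqP p0 => // ->.
have HdF : forall nu mu k, ltd k (d mu) ->
    delta nu (F mu k) = if nu == mu then Dn p (F mu) k (p ^ k - 1) else 0.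
  move=> nu mu k hk; rewrite /F hk (H nu mu k hk).1; case: eqP => // _.
  apply: xdivF; last by rewrite ltn_subLR ?expn_gt0 ?p0 // addnC addn1.
  by move=> k' hk'; apply: (ltd_le _ _ _ hk); apply: ltnW.
have xdivM : forall mu i j, ltpow p (d mu) i -> ltpow p (d mu) j ->
    xdiv p x mu i * xdiv p x mu j =
    ('C(i + j, j))%:R * (if ltpow p (d mu) (i + j) then xdiv p x mu (i + j) else 0).
  move=> mu i j hi hj.
  have hi' := Nb_lt _ _ (i + j)%N hi (leq_addr j i).
  have hj' := Nb_lt _ _ (i + j)%N hj (leq_addl i j).
  rewrite (xdivF mu _ i (Nb_ok mu (i + j)%N) hi') (xdivF mu _ j (Nb_ok mu (i + j)%N) hj').
  rewrite (DnM charA _ (FC mu mu) (Hx mu)) // Nb_iff; case: ifP => // h.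
  by rewrite (xdivF mu _ (i + j)%N (Nb_ok mu (i + j)%N) h).
have xdivD : forall nu mu i, ltpow p (d mu) i ->
    delta nu (xdiv p x mu i) = if (nu == mu) && (0 < i)%N then xdiv p x mu i.-1 else 0.
  move=> nu mu i hi.
  have hi' := Nb_lt _ _ i hi (leqnn i).
  rewrite (xdivF mu _ i (Nb_ok mu i) hi').
  case: (eqVneq nu mu) => [enm|nm] /=.
    subst nu.
    rewrite (DnD charA _ _ (FC mu mu) (Hx mu) _ (der mu)) //; last first.
      move=> k hk; rewrite HdF ?eqxx //; exact: Nb_ok hk.
    case: ifP => // i0; rewrite (xdivF mu _ i.-1 (Nb_ok mu i)) //.
    by apply: leq_ltn_trans hi'; apply: leq_pred.
  apply: Dn_der0 => // k hk; rewrite HdF ?(negbTE nm) //; exact: Nb_ok hk.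
have ltI : forall a : 'I_n -> nat, inI p d a -> forall i, ltpow p (d i) (a i).
  by move=> a /forallP.
split.
  by rewrite /xmulti big1 // => i _; rewrite xdiv0.
split.
  move=> a b aI bI; rewrite /xmulti -prod_split; last first.
    by move=> i j; apply: xdiv_comm; apply: ltI.
  rewrite (eq_bigr (fun i => ('C(a i + b i, b i))%:R *
     (if ltpow p (d i) (a i + b i) then xdiv p x i (a i + b i) else 0))); last first.
    by move=> i _; rewrite xdivM //; apply: ltI.
  rewrite prod_split; last by move=> i j; apply: commr_nat.
  rewrite -natr_prod prod_if; congr (_ * _).
  have -> : all (fun i => ltpow p (d i) (a i + b i)) (index_enum 'I_n) =
      inI p d (fun i => a i + b i)%N.
    apply/allP/forallP => h i; first by apply: h; rewrite mem_index_enum.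
    by move=> _; apply: h.
  by [].
have xmD : forall nu (b : 'I_n -> nat), inI p d b -> delta nu (xmulti p x b) =
    if (0 < b nu)%N then xmulti p x (fun i => if i == nu then (b i).-1 else b i) else 0.
  move=> nu b bI; rewrite /xmulti.
  rewrite (der_prod_one (delta nu) (index_enum _) (fun i => xdiv p x i (b i)) nu
     (if (0 < b nu)%N then xdiv p x nu (b nu).-1 else 0) (der nu)); last first.
  - by rewrite xdivD ?eqxx //; apply: ltI.
  - by move=> i ni; rewrite xdivD ?(negbTE ni) 1?eq_sym ?(negbTE ni) //; apply: ltI.
  - by rewrite mem_index_enum.
  - exact: index_enum_uniq.
  case: ifP => b0.
    by apply: eq_bigr => i _; case: eqP => [->|].
  by apply: (prod_zero _ _ nu); rewrite ?mem_index_enum ?eqxx ?b0.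
have xmIter : forall nu m (b : 'I_n -> nat), inI p d b ->
    iter m (delta nu) (xmulti p x b) =
    if (m <= b nu)%N then xmulti p x (fun i => if i == nu then b i - m else b i)%N else 0.
  move=> nu m b bI; elim: m => [|m IH] /=.
    by apply: xmulti_ext => i; case: eqP => // ->; rewrite subn0.
  rewrite IH; case: (leqP m (b nu)) => hm; last first.
    rewrite der0 //; case: ifP => // h; exfalso; lia.
  rewrite xmD; last by apply: (inI_le _ b bI) => i; case: eqP => // _; apply: leq_subr.
  rewrite eqxx subn_gt0; case: ifP => // _.
  by apply: xmulti_ext => i; case: eqP => // _; rewrite subnS.
have fold : forall a (s : seq 'I_n), uniq s -> forall b, inI p d b ->
    foldr (fun i f => iter (a i) (delta i) \o f) id s (xmulti p x b) =
    if all (fun i => a i <= b i)%N s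
    then xmulti p x (fun i => if i \in s then b i - a i else b i)%N else 0.
  move=> a; elim=> [|i s IH] /=.
    by move=> _ b bI; apply: xmulti_ext.
  move=> /andP [nis us] b bI; rewrite IH //; case: ifP => hs; last first.
    by rewrite iter_der0 // andbF.
  rewrite xmIter; last by apply: (inI_le _ b bI) => j; case: ifP => // _; apply: leq_subr.
  rewrite (negbTE nis) andbT; case: ifP => // _.
  apply: xmulti_ext => j; rewrite in_cons; case: eqP => [->|] //=.
  by rewrite (negbTE nis).
move=> a b bI; rewrite /dpow fold ?enum_uniq //.
have -> : all (fun i => a i <= b i)%N (enum 'I_n) = [forall i, a i <= b i]%N.
  apply/allP/forallP => h i; first by apply: h; rewrite mem_enum.
  by move=> _; apply: h.
case: ifP => // _; apply: xmulti_ext => i.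
by rewrite mem_enum.
Qed.
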